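(* For all positive integers $a,b$ and every integer $k$ with $1\le k\le\min(a,b)$, there exist positions of the parallel chip-firing game on $K_{a,b}$ with period exactly $k$ and positions with period exactly $2k$.
   Context: Parallel chip-firing game: a position $\sigma$ assigns a nonnegative integer to each vertex; in each step every vertex $v$ with $\sigma(v)\ge\deg(v)$ simultaneously sends one chip to each neighbor. $K_{a,b}$ is the complete bipartite graph with sides of sizes $a$ and $b$. The period $p(\sigma)$ is the least positive integer $p$ such that $U^{t+p}\sigma=U^t\sigma$ for all sufficiently large $t$, where $U$ is the step operator. *)

(* Defs.v *)
From mathcomp Require Import all_boot.
Set Implicit Arguments. Unset Strict Implicit. Unset Printing Implicit Defensive.

(* Parallel chip-firing on a simple graph given by a symmetric irreflexive
   relation [e] on a finite vertex type [V]. *)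
Section ChipFiring.
Variables (V : finType) (e : rel V).

Definition deg (v : V) : nat := #|[pred u | e v u]|.

Definition position := {ffun V -> nat}.

Definition fires (s : position) (v : V) : bool := deg v <= s v.

Definition step (s : position) : position :=
  [ffun v => s v - (if fires s v then deg v else 0)
             + #|[pred u | e v u && fires s u]|].

Definition iterU (t : nat) (s : position) : position := iter t step s.

Definition eventually_periodic_with (s : position) (p : nat) : Prop :=
  exists T, forall t, T <= t -> iterU (t + p) s = iterU t s.

Definition has_period (s : position) (p : nat) : Prop :=
  0 < p /\ eventually_periodic_with s p /\
  forall q, 0 < q -> q < p -> ~ eventually_periodic_with s q.
End ChipFiring.

Definition Kab_vertex (a b : nat) : finType := ('I_a + 'I_b)%type.

Definition Kab_edge (a b : nat) : rel (Kab_vertex a b) :=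
  fun x y => match x, y with
             | inl _, inr _ => true
             | inr _, inl _ => true
             | _, _ => false
             end.

(* Main.v *)
Require Import Defs.
From mathcomp Require Import all_boot.
From Stdlib Require Import Lia.
Ltac tolia := repeat match goal with
  | H : is_true (leq _ _) |- _ => move/leP: H => H
  | H : is_true (_ == _) |- _ => move/eqP: H => H
  | H : is_true (~~ (_ == _)) |- _ => move/eqP: H => H
  | H : is_true (~~ (leq _ _)) |- _ => rewrite -ltnNge in H
  | H : (_ == _) = false |- _ => move/negbT: H => H
  | H : (leq _ _) = false |- _ => move/negbT: H => H
  | H : (leq _ _) = true |- _ => move: H => /leP H
  | H : (_ == _) = true |- _ => move: H => /eqP H
  | |- is_true (~~ (leq _ _)) => rewrite -ltnNge
  | |- is_true (leq _ _) => apply/leP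
  | |- (leq _ _) = true => apply/leP
  | |- is_true (~~ (_ == _)) => apply/eqP
  | |- is_true (_ == _) => apply/eqP
  end; change addn with Nat.add in *; change subn with Nat.sub in *; change muln with Nat.mul in *; change predn with Nat.pred in *;
  lia.

Section Gen.
Variable p : nat.
Hypothesis hp : 0 < p.
Definition dist (m x : nat) := if m <= x then x - m else p + x - m.
Definition prevp (c : nat) := if c == 0 then p.-1 else c.-1.
Definition nxt (m : nat) := if m.+1 == p then 0 else m.+1.

Lemma nxt_lt m : m < p -> nxt m < p.
Proof. rewrite /nxt; case: eqP => H1 H2; tolia. Qed.
Lemma dist0 m x : m < p -> x < p -> (dist m x == 0) = (x == m).
Proof. rewrite /dist => *; apply/eqP/eqP; repeat case: ifP => ?; tolia. Qed.
Lemma dist_lt m x : m < p -> x < p -> dist m x < p.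
Proof. rewrite /nxt /prevp => *; repeat case: ifP => ?; rewrite /dist /= ?leq0n; repeat case: ifP => ?; tolia. Qed.
Lemma dist_nxt m x : m < p -> x < p -> x != m -> dist (nxt m) x = (dist m x).-1.
Proof. rewrite /nxt /prevp => *; repeat case: ifP => ?; rewrite /dist /= ?leq0n; repeat case: ifP => ?; tolia. Qed.
Lemma dist_nxt_self m : m < p -> dist (nxt m) m = p.-1.
Proof. rewrite /nxt /prevp => *; repeat case: ifP => ?; rewrite /dist /= ?leq0n; repeat case: ifP => ?; tolia. Qed.
Lemma dist_prev m c : m < p -> c < p -> c != m -> dist m (prevp c) = (dist m c).-1.
Proof. rewrite /nxt /prevp => *; repeat case: ifP => ?; rewrite /dist /= ?leq0n; repeat case: ifP => ?; tolia. Qed.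

Variables (X Y : finType) (px : X -> nat) (py : Y -> nat).
Hypothesis hpx : forall x, px x < p.
Hypothesis hpy : forall y, py y < p.
Hypothesis hprev : forall x, exists y, py y = prevp (px x).

Definition S m x := #|[pred y | dist m (py y) < dist m (px x)]|.

Lemma S_le m x : S m x <= #|Y|.
Proof. exact: max_card. Qed.

Lemma fires_side m x : m < p -> (#|Y| <= #|Y| - S m x) = (px x == m).
Proof.
move=> hm; case: (boolP (px x == m)) => H.
  have -> : S m x = 0.
    apply: eq_card0 => y; rewrite !inE; move: (H); rewrite -dist0 //; move/eqP->.
    by rewrite ltn0.
  by rewrite subn0 leqnn.
have [y Hy] := hprev x.
have Hd : 0 < dist m (px x) by rewrite lt0n dist0.
have hS : 0 < S m x.
  apply/card_gt0P; exists y; rewrite !inE Hy dist_prev ?hpx //; tolia.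
have := S_le m x; move=> ?; apply/negbTE; tolia.
Qed.

Lemma step_side m x : m < p ->
  #|Y| - S m x - (if px x == m then #|Y| else 0) + #|[pred y | py y == m]|
  = #|Y| - S (nxt m) x.
Proof.
move=> hm; case: (boolP (px x == m)) => H.
  have -> : S m x = 0.
    apply: eq_card0 => y; rewrite !inE; move: (H); rewrite -dist0 //; move/eqP->.
    by rewrite ltn0.
  have -> : S (nxt m) x = #|[predC [pred y | py y == m]]|.
    apply: eq_card => y; rewrite !inE (eqP H) dist_nxt_self //.
    case: (boolP (py y == m)) => Hy.
      by rewrite (eqP Hy) dist_nxt_self // ltnn.
    rewrite dist_nxt //; have := @dist_lt m (py y) hm (hpy y); move=> ?; have Hd0: 0 < dist m (py y) by rewrite lt0n dist0 ?hpy. rewrite /=; tolia.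
  have E0 := cardC [pred y | py y == m]; rewrite subn0 subnn add0n -[in RHS]E0.
  by rewrite addnK.
have Hd : 0 < dist m (px x) by rewrite lt0n dist0.
have Hdl : dist m (px x) < p by apply: dist_lt.
have E : S m x = #|[pred y | py y == m]| + S (nxt m) x.
  rewrite /S -(cardID [pred y | py y == m] [pred y | dist m (py y) < dist m (px x)]).
  congr (_ + _); apply: eq_card => y; rewrite !inE.
    case Hy: (py y == m); rewrite ?andbT ?andbF //; rewrite (eqP Hy); have -> : dist m m = 0 by rewrite /dist leqnn subnn.
    by rewrite Hd.
  rewrite (@dist_nxt m (px x)) ?hpx //.
  case Hy: (py y == m) => /=.
    rewrite (eqP Hy) dist_nxt_self //; apply/esym/negbTE; tolia.
  rewrite dist_nxt ?hpy ?Hy //.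
  have Hd0: 0 < dist m (py y) by rewrite lt0n dist0 ?hpy ?Hy.
  apply/idP/idP => ?; tolia.
rewrite E subn0; have := S_le m x; rewrite E => ?; tolia.
Qed.
End Gen.

Lemma card_sum_pred (A B : finType) (P : pred (A + B)) :
  #|P| = #|[pred x | P (inl x)]| + #|[pred y | P (inr y)]|.
Proof.
rewrite -!sum1_card. rewrite (big_sumType _ (fun u => u \in P)) /=. done.
Qed.

Section Main.
Variables (a b p : nat) (hp : 0 < p) (pl : 'I_a -> nat) (pr : 'I_b -> nat).
Hypothesis hpl : forall i, pl i < p.
Hypothesis hpr : forall j, pr j < p.
Hypothesis hprevl : forall i, exists j, pr j = prevp p (pl i).
Hypothesis hprevr : forall j, exists i, pl i = prevp p (pr j).

Local Notation E := (Kab_edge (a:=a) (b:=b)).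

Definition sigma (m : nat) : position (Kab_vertex a b) :=
  [ffun v => match v with
             | inl i => b - @S p _ _ pl pr m i
             | inr j => a - @S p _ _ pr pl m j end].

Lemma deg_l i : deg E (inl i) = b.
Proof.
rewrite /deg card_sum_pred /=.
rewrite (@eq_card0 _ [pred x | _]) // (@eq_card _ _ predT) ?card_ord //.
Qed.
Lemma deg_r j : deg E (inr j) = a.
Proof.
rewrite /deg card_sum_pred /=.
rewrite (@eq_card _ _ predT) ?card_ord // (@eq_card0 _ [pred x | _]) ?addn0 //.
Qed.


Lemma fires_l m i : m < p -> fires E (sigma m) (inl i) = (pl i == m).
Proof.
move=> hm; rewrite /fires deg_l ffunE.
have := @fires_side p _ _ pl pr hpl hprevl m i hm; by rewrite card_ord.
Qed.
Lemma fires_r m j : m < p -> fires E (sigma m) (inr j) = (pr j == m).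
Proof.
move=> hm; rewrite /fires deg_r ffunE.
have := @fires_side p _ _ pr pl hpr hprevr m j hm; by rewrite card_ord.
Qed.

Lemma step_sigma m : m < p -> step E (sigma m) = sigma (nxt p m).
Proof.
move=> hm; apply/ffunP => v; rewrite !ffunE.
case: v => [i|j].
  rewrite fires_l // deg_l card_sum_pred /=.
  rewrite (@eq_card0 _ [pred x | _]) // add0n.
  rewrite (@eq_card _ _ [pred j | pr j == m]); last by move=> j; rewrite !inE fires_r.
  have := @step_side p _ _ pl pr hpl hpr m i hm; rewrite card_ord /=.
  by [].
rewrite fires_r // deg_r card_sum_pred /=.
rewrite [#|[pred: _ | false]|]eq_card0 ?addn0 //.
rewrite (@eq_card _ _ [pred j | pl j == m]); last by move=> j'; rewrite !inE fires_l.
have := @step_side p _ _ pr pl hpr hpl m j hm; rewrite card_ord /=.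
by [].
Qed.

Lemma nxt_mod t : nxt p (t %% p) = t.+1 %% p.
Proof.
have E : t.+1 %% p = (t %% p).+1 %% p by rewrite -[in RHS]addn1 modnDml addn1.
rewrite E /nxt; case: eqP => H.
  by rewrite H modnn.
have := ltn_pmod t hp => ?; rewrite [(t %% p).+1 %% p]modn_small //; tolia.
Qed.

Lemma iter_sigma t : iterU E t (sigma 0) = sigma (t %% p).
Proof.
elim: t => [|t IH]; first by rewrite mod0n.
rewrite /iterU iterS -/(iterU E t _) IH step_sigma ?ltn_pmod // nxt_mod //.
Qed.

Lemma period_sigma : (exists i0, pl i0 = 0) -> has_period E (sigma 0) p.
Proof.
move=> [i0 Hi0]; split; first exact: hp.
split.
  by exists 0 => t _; rewrite !iter_sigma modnDr.
move=> q hq hqp [T HT].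
have := HT (T * p) (leq_pmulr T hp).
rewrite !iter_sigma modnMDl modnMl modn_small // => H.
have := congr1 (fun s => fires E s (inl i0)) H; rewrite /= !fires_l ?ltn_pmod //.
by rewrite Hi0 eqxx; case: q hq {hqp HT H}.
Qed.
End Main.

Definition ph1 (k n : nat) (i : 'I_n) : nat := if i < k then (i:nat) else 0.
Definition phL2 (k n : nat) (i : 'I_n) : nat := if i < k then 2 * i else 0.
Definition phR2 (k n : nat) (i : 'I_n) : nat := if i < k then 2 * i + 1 else 1.

Lemma prevp_lt p c : 0 < p -> c < p -> prevp p c < p.
Proof. rewrite /prevp => *; case: ifP => ?; tolia. Qed.

Lemma ph1_lt k n i : 0 < k -> @ph1 k n i < k.
Proof. rewrite /ph1 => *; case: ifP => ?; tolia. Qed.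

Lemma ph1_surj k n v : k <= n -> v < k -> exists j : 'I_n, @ph1 k n j = v.
Proof.
move=> hkn hv; have hvn : v < n by tolia.
by exists (Ordinal hvn); rewrite /ph1 /= hv.
Qed.

Theorem proposition3p7 (a b : nat) (ha : 0 < a) (hb : 0 < b) (k : nat)
    (hk1 : 1 <= k) (hk2 : k <= minn a b) :
  (exists s : position (Kab_vertex a b),
      has_period (Kab_edge (a:=a) (b:=b)) s k) /\
  (exists s : position (Kab_vertex a b),
      has_period (Kab_edge (a:=a) (b:=b)) s (2 * k)).
Proof.
have := hk2; rewrite leq_min => /andP [ka kb].
split.
  exists (sigma a b k (@ph1 k a) (@ph1 k b) 0).
  apply: period_sigma => //.
  - by move=> i; apply: ph1_lt.
  - by move=> i; apply: ph1_lt.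
  - move=> i; apply: ph1_surj => //; apply: prevp_lt => //; exact: ph1_lt.
  - move=> i; apply: ph1_surj => //; apply: prevp_lt => //; exact: ph1_lt.
  - have h0 : 0 < a by [].
    by exists (Ordinal h0); rewrite /ph1 /= hk1.
exists (sigma a b (2 * k) (@phL2 k a) (@phR2 k b) 0).
apply: period_sigma.
- tolia.
- by move=> i; rewrite /phL2; case: ifP => ?; tolia.
- by move=> i; rewrite /phR2; case: ifP => ?; tolia.
- move=> i; rewrite /phL2; case: ifP => hi.
    case: (posnP i) => hi0.
      have hj : k.-1 < b by tolia.
      exists (Ordinal hj); rewrite /phR2 /prevp /=; rewrite hi0 muln0 eqxx; repeat case: ifP => ?; tolia.
    have hj : (i:nat).-1 < b by tolia.
    exists (Ordinal hj); rewrite /phR2 /prevp /=; repeat case: ifP => ?; tolia.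
  have hj : k.-1 < b by tolia.
  exists (Ordinal hj); rewrite /phR2 /prevp /=; repeat case: ifP => ?; tolia.
- move=> j; rewrite /phR2; case: ifP => hj.
    have hi : (j:nat) < a by tolia.
    exists (Ordinal hi); rewrite /phL2 /prevp /=; repeat case: ifP => ?; tolia.
  have hi : 0 < a by tolia.
  exists (Ordinal hi); rewrite /phL2 /prevp /=; repeat case: ifP => ?; tolia.
- have h0 : 0 < a by [].
  by exists (Ordinal h0); rewrite /phL2 /= hk1.
Qed.
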